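(* Let $X$ and $Z$ be real Banach spaces and $Y$ a closed subspace of $Z$ which has property-$(SU)$ in $Z$. Identify $(X\widehat{\otimes}_\pi Y)^*$ with $\mathcal{L}(X,Y^* )$ and $(X\widehat{\otimes}_\pi Z)^*$ with $\mathcal{L}(X,Z^* )$. Then every isometry $S\in\mathcal{L}(X,Y^* )$ has a unique norm-preserving extension to $X\widehat{\otimes}_\pi Z$, i.e. there is exactly one $T\in\mathcal{L}(X,Z^* )$ with $\|T\|=\|S\|$ and $(Tx)|_Y=Sx$ for all $x\in X$.
   Context: $X\widehat{\otimes}_\pi Y$ denotes the completed projective tensor product; its dual is identified with the space $\mathcal{L}(X,Y^* )$ of bounded linear operators via $S(x\otimes y)=(Sx)(y)$. Since $Y$ is an ideal in $Z$ (see below), $X\widehat{\otimes}_\pi Y$ is isometrically a subspace of $X\widehat{\otimes}_\pi Z$. $Y^\perp=\{z^*\in Z^*:z^*|_Y=0\}$. $Y$ has property-$(SU)$ in $Z$ if there is a bounded linear projection $P$ on $Z^*$ with range $Y^\perp$ such that, with $G=(I-P)(Z^* )$, for every $z^*=y^\#+y^\perp$ with $y^\#\in G$, $0\neq y^\perp\in Y^\perp$, one has $\|z^*\|>\|y^\#\|$; equivalently, every $y^*\in Y^*$ has a unique norm-preserving extension to $Z$ and there is a norm-one projection on $Z^*$ with kernel $Y^\perp$ (i.e. $Y$ is an ideal in $Z$). *)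

(* Defs.v *)
From HB Require Import structures.
From mathcomp Require Import all_boot all_order all_algebra.
From mathcomp Require Import all_classical all_reals all_analysis.
Set Implicit Arguments. Unset Strict Implicit. Unset Printing Implicit Defensive.
Import Order.TTheory GRing.Theory Num.Theory.
Import numFieldNormedType.Exports.
Local Open Scope classical_set_scope.
Local Open Scope ring_scope.

Section Defs.
Variable R : realType.

Definition lin_subspace (Z : normedModType R) (Y : set Z) : Prop :=
  Y 0 /\ forall (a : R) y1 y2, Y y1 -> Y y2 -> Y (a *: y1 + y2).

(* A functional on the subspace Y, represented by f : Z -> R (values off Y
   are irrelevant); "f is a bounded linear functional on Y", i.e. f|_Y \in Y^* *)
Definition is_dual_on (Z : normedModType R) (Y : set Z) (f : Z -> R) : Prop :=
  (forall (a : R) y1 y2, Y y1 -> Y y2 -> f (a *: y1 + y2) = a * f y1 + f y2) /\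
  exists C : R, forall y, Y y -> `|f y| <= C * `|y|.

Definition dual_norm (Z : normedModType R) (Y : set Z) (f : Z -> R) : R :=
  sup [set `|f y| | y in [set y | Y y /\ `|y| <= 1]].

Definition is_op_to_dual (X Z : normedModType R) (Y : set Z) (S : X -> Z -> R)
  : Prop :=
  (forall x, is_dual_on Y (S x)) /\
  (forall (a : R) x1 x2 y, Y y -> S (a *: x1 + x2) y = a * S x1 y + S x2 y) /\
  exists C : R, forall x, dual_norm Y (S x) <= C * `|x|.

Definition op_norm (X Z : normedModType R) (Y : set Z) (S : X -> Z -> R) : R :=
  sup [set dual_norm Y (S x) | x in [set x : X | `|x| <= 1]].

Definition dual_isometry (X Z : normedModType R) (Y : set Z) (S : X -> Z -> R)
  : Prop := forall x, dual_norm Y (S x) = `|x|.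

Definition in_dual (Z : normedModType R) (f : Z -> R) : Prop := is_dual_on setT f.

Definition annihilator (Z : normedModType R) (Y : set Z) (f : Z -> R) : Prop :=
  in_dual f /\ forall y, Y y -> f y = 0.

(* property-(SU): there is a bounded linear projection P on Z^* with range
   Y^perp such that, for z^* = y^# + y^perp with y^# in (I-P)(Z^* ) and
   0 <> y^perp in Y^perp, ||z^*|| > ||y^#||.  Since the decomposition is
   unique (y^perp = P z^*, y^# = z^* - P z^* ), this is stated for z^*. *)
Definition property_SU (Z : normedModType R) (Y : set Z) : Prop :=
  exists P : (Z -> R) -> (Z -> R),
    [/\ (forall f, in_dual f -> in_dual (P f)) /\
        (forall (a : R) f g, in_dual f -> in_dual g ->
            P (fun z => a * f z + g z) = (fun z => a * P f z + P g z)),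
        (exists C : R, forall f, in_dual f -> dual_norm setT (P f) <= C * dual_norm setT f),
        (forall f, in_dual f -> annihilator Y (P f)),
        (forall f, annihilator Y f -> P f = f) &
        (forall f, in_dual f -> P f <> (fun _ => 0) ->
            dual_norm setT (fun z => f z - P f z) < dual_norm setT f)].

End Defs.

(* Main.v *)
Require Import Defs.
From HB Require Import structures.
From mathcomp Require Import all_boot all_order all_algebra.
From mathcomp Require Import all_classical all_reals all_analysis.
From mathcomp Require Import ring lra.
Set Implicit Arguments. Unset Strict Implicit.
Import Order.TTheory GRing.Theory Num.Theory.
Import numFieldNormedType.Exports.
Local Open Scope classical_set_scope.
Local Open Scope ring_scope.
Definition Qg (R : realType) (V : lmodType R) (p : V -> R) (G : set (V * R)) : Prop :=
 [/\ (forall u v, G u -> G v -> u.1 = v.1 -> u.2 = v.2),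
  (forall t u v, G u -> G v -> G (t *: u.1 + v.1, t * u.2 + v.2)) &
  (forall u, G u -> u.2 <= p u.1)].

Lemma Qg_sub (R : realType) (V : lmodType R) (p : V -> R) (G : set (V * R)) :
  (forall u v, G u -> G v -> exists X, [/\ Qg p X, X `<=` G, X u & X v]) -> Qg p G.
Proof.
move=> key; split.
- by move=> u v Gu Gv; have [X [[f _ _] _ Xu Xv]] := key u v Gu Gv; exact: f.
- move=> t u v Gu Gv; have [X [[_ c _] XG Xu Xv]] := key u v Gu Gv.
  by apply: XG; exact: c.
- by move=> u Gu; have [X [[_ _ d] _ Xu _]] := key u u Gu Gu; exact: d.
Qed.

Lemma HB_chain (R : realType) (V : lmodType R) (p : V -> R) (G0 : set (V * R))
  (F : set (set (V * R))) : Qg p G0 ->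
  F `<=` (fun X => Qg p (X `|` G0)) -> total_on F subset ->
  Qg p ((\bigcup_(X in F) X) `|` G0).
Proof.
move=> Q0 FP tot; apply: Qg_sub => u v.
have pick w : ((\bigcup_(X in F) X) `|` G0) w ->
    exists X, (X = set0 \/ F X) /\ (X `|` G0) w.
  case=> [[X FX Xw]|G0w]; first by exists X; split; [right|rewrite /setU /=; left].
  by exists set0; split; [left|rewrite /setU /=; right].
move=> /pick [X1 [h1 w1]] /pick [X2 [h2 w2]].
have goodX X : X = set0 \/ F X ->
    Qg p (X `|` G0) /\ (X `|` G0) `<=` ((\bigcup_(X in F) X) `|` G0).
  case=> [->|FX]; first by rewrite set0U; split => // w G0w; right.
  split; first exact: FP.
  move=> w [Xw|G0w]; [left; exists X|right] => //.
have [X [hX s1 s2]] : exists X, [/\ X = set0 \/ F X, X1 `<=` X & X2 `<=` X].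
  case: h1 => [->|F1]; first by exists X2; split => // ? [].
  case: h2 => [->|F2]; first by exists X1; split; [right|done|move=> ? []].
  by have [s|s] := tot _ _ F1 F2; [exists X2|exists X1]; split => //; right.
have [QX sX] := goodX X hX.
exists (X `|` G0); split => //.
  by case: w1 => [/s1 ?|?]; [left|rewrite /setU /=; right].
by case: w2 => [/s2 ?|?]; [left|rewrite /setU /=; right].
Qed.

Lemma hahn_banach (R : realType) (V : lmodType R) (p : V -> R) (Y : set V) (f : V -> R) :
  (forall u v, p (u + v) <= p u + p v) ->
  (forall t u, 0 < t -> p (t *: u) = t * p u) ->
  Y 0 -> (forall a y1 y2, Y y1 -> Y y2 -> Y (a *: y1 + y2)) ->
  (forall a y1 y2, Y y1 -> Y y2 -> f (a *: y1 + y2) = a * f y1 + f y2) ->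
  (forall y, Y y -> f y <= p y) ->
  exists g : V -> R, [/\ (forall a u v, g (a *: u + v) = a * g u + g v),
     (forall y, Y y -> g y = f y) & (forall u, g u <= p u)].
Proof.
move=> padd phom Y0 Ylin flin fp.
pose G0 := [set u : V * R | Y u.1 /\ u.2 = f u.1].
have f0 : f 0 = 0.
  have := flin 1 0 0 Y0 Y0; rewrite scale1r addr0 mul1r => h.
  by apply: (@addrI _ (f 0)); rewrite addr0 -h.
have Q0 : Qg p G0.
  split.
  - by move=> [u a] [v b]; rewrite /G0 /= => -[_ ->] [_ ->] ->.
  - move=> t [u a] [v b]; rewrite /G0 /= => -[Yu ->] [Yv ->].
    by split; [exact: Ylin | rewrite flin].
  - by move=> [u a]; rewrite /G0 /= => -[Yu ->]; exact: fp.
have [A [QA maxA]] := @Zorn_bigcup _ (fun X => Qg p (X `|` G0))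
   (fun F FP tot => HB_chain Q0 FP tot).
set G := A `|` G0 in QA maxA.
have [Qf Qc Qd] := QA.
have G00 : G (0, 0) by rewrite /G /setU /=; right; split => //=; rewrite f0.
have tot : forall z, exists a, G (z, a).
  move=> z0; apply: contrapT => nz0.
  have nz : forall a, ~ G (z0, a) by move=> a Ga; apply: nz0; exists a.
  pose E := [set u.2 - p (u.1 - z0) | u in G].
  have E_ne : E !=set0 by exists (0 - p (0 - z0)); exists (0,0).
  have Eub : forall v, G v -> ubound E (p (v.1 + z0) - v.2).
    move=> v Gv _ [u Gu <-].
    have := Qd _ (Qc 1 _ _ Gu Gv); rewrite /= scale1r mul1r => h.
    have := padd (u.1 - z0) (v.1 + z0).
    have -> : (u.1 - z0) + (v.1 + z0) = u.1 + v.1 by rewrite addrACA addNr addr0.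
    move=> h2; lra.
  pose c := sup E.
  have c_ge : forall u, G u -> u.2 - p (u.1 - z0) <= c.
    move=> u Gu; apply: ub_le_sup; last by exists u.
    by exists (p ((0:V,0:R).1 + z0) - (0:V,0:R).2); exact: Eub.
  have c_le : forall v, G v -> c <= p (v.1 + z0) - v.2.
    by move=> v Gv; apply: ge_sup => //; exact: Eub.
  pose G' := [set w : V * R | exists u t, G u /\ w = (u.1 + t *: z0, u.2 + t * c)].
  have GG' : G `<=` G'.
    by move=> [u a] Gu; exists (u,a), 0; rewrite scale0r mul0r !addr0.
  have G'z0 : G' (z0, c) by exists (0,0), 1; rewrite scale1r mul1r !add0r.
  have QG' : Qg p G'.
    split.
    - move=> _ _ [u1 [t1 [Gu1 ->]]] [u2 [t2 [Gu2 ->]]] /= e.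
      have [tt|tn] := eqVneq t1 t2.
      + subst t2; have e' : u1.1 = u2.1 by apply: (addIr (t1 *: z0)).
        by rewrite (Qf _ _ Gu1 Gu2 e').
      + exfalso.
        have := Qc (t1 - t2)^-1 _ _ (Qc (-1) _ _ Gu1 Gu2) G00 => /=.
        suff -> : (t1 - t2)^-1 *: (-1 *: u1.1 + u2.1) + 0 = z0 by apply: nz.
        have -> : -1 *: u1.1 + u2.1 = (t1 - t2) *: z0.
          rewrite scaleN1r scalerBl.
          have -> : u2.1 = u1.1 + t1 *: z0 - t2 *: z0 by rewrite e addrK.
          by rewrite -addrA addKr.
        by rewrite addr0 scalerA mulVf ?scale1r // subr_eq0.
    - move=> t _ _ [u1 [t1 [Gu1 ->]]] [u2 [t2 [Gu2 ->]]] /=.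
      exists (t *: u1.1 + u2.1, t * u1.2 + u2.2), (t * t1 + t2); split; first exact: Qc.
      congr pair => /=; last by ring.
      by rewrite scalerDr scalerDl scalerA addrACA.
    - move=> _ [u [t [Gu ->]]] /=.
      case: (ltgtP t 0) => [tneg|tpos|->]; last first.
      + by rewrite scale0r mul0r !addr0; exact: Qd.
      + have := c_le _ (Qc t^-1 _ _ Gu G00); rewrite /= !addr0 => h.
        have hp : p (u.1 + t *: z0) = t * p (t^-1 *: u.1 + z0).
          by rewrite -phom // scalerDr scalerA mulfV ?gt_eqF // scale1r.
        rewrite hp.
        have := ler_wpM2l (ltW tpos) h; rewrite mulrBr mulrA mulfV ?gt_eqF // mul1r.
        move=> h2; lra.
      + have ntpos : 0 < - t by rewrite oppr_gt0.
        have := c_ge _ (Qc (- t)^-1 _ _ Gu G00); rewrite /= !addr0 => h.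
        have hp : p (u.1 + t *: z0) = (- t) * p ((- t)^-1 *: u.1 - z0).
          rewrite -phom // scalerBr scalerA mulfV ?gt_eqF // scale1r.
          by rewrite scaleNr opprK.
        rewrite hp.
        have := ler_wpM2l (ltW ntpos) h; rewrite mulrBr mulrA mulfV ?gt_eqF // mul1r.
        move=> h2; lra.
  apply: (maxA G'); last first.
    have -> : G' `|` G0 = G' by apply/setUidPl => w G0w; apply: GG'; right.
    exact: QG'.
  split; first by move=> w Aw; apply: GG'; left.
  by move=> sub; apply: (nz c); left; exact: sub.
have [g hg] := choice tot.
exists g; split.
- by move=> a u v; exact: (Qf _ _ (hg _) (Qc a _ _ (hg u) (hg v)) erefl).
- move=> y Yy; have Gy : G (y, f y) by right.
  exact: (Qf _ _ (hg y) Gy erefl).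
- by move=> u; exact: (Qd _ (hg u)).
Qed.

Lemma dn_f0 (R : realType) (Z : normedModType R) (Y : set Z) (f : Z -> R) :
  Y 0 -> is_dual_on Y f -> f 0 = 0.
Proof.
move=> Y0 [fl _]; have := fl 1 0 0 Y0 Y0; rewrite scale1r addr0 mul1r => h.
by apply: (@addrI _ (f 0)); rewrite addr0 -h.
Qed.

Lemma dn_ub (R : realType) (Z : normedModType R) (Y : set Z) (f : Z -> R) y :
  is_dual_on Y f -> Y y -> `|y| <= 1 -> `|f y| <= dual_norm Y f.
Proof.
move=> [_ [C hC]] Yy y1; apply: ub_le_sup; last by exists y.
exists `|C| => _ [z [Yz z1] <-].
apply: (le_trans (hC z Yz)); apply: (@le_trans _ _ (`|C| * `|z|)).
  by apply: ler_wpM2r => //; exact: ler_norm.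
by rewrite -[X in _ <= X]mulr1; apply: ler_wpM2l.
Qed.

Lemma dn_le (R : realType) (Z : normedModType R) (Y : set Z) (f : Z -> R) M :
  Y 0 -> (forall y, Y y -> `|y| <= 1 -> `|f y| <= M) -> dual_norm Y f <= M.
Proof.
move=> Y0 H; apply: ge_sup.
  by exists `|f 0|; exists 0 => //; split => //; rewrite normr0 ler01.
by move=> _ [y [Yy y1] <-]; exact: H.
Qed.

Lemma dn_sub (R : realType) (Z : normedModType R) (Y : set Z) (f : Z -> R) :
  in_dual f -> Y 0 -> dual_norm Y f <= dual_norm setT f.
Proof.
by move=> fd Y0; apply: dn_le => // y _ y1; exact: (@dn_ub _ _ setT f y fd I y1).
Qed.

Lemma dn_eq (R : realType) (Z : normedModType R) (Y : set Z) (f g : Z -> R) :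
  (forall y, Y y -> f y = g y) -> dual_norm Y f = dual_norm Y g.
Proof.
move=> hfg; rewrite /dual_norm; congr sup; apply/seteqP; split => _ [y hy <-];
  exists y => //; case: hy => Yy _; by rewrite hfg.
Qed.

Lemma dn_bound (R : realType) (Z : normedModType R) (Y : set Z) (f : Z -> R) y :
  lin_subspace Y -> is_dual_on Y f -> Y y -> `|f y| <= dual_norm Y f * `|y|.
Proof.
move=> [Y0 Ylin] fd Yy.
have [->|ny] := eqVneq y 0; first by rewrite (dn_f0 Y0 fd) normr0 normr0 mulr0.
have n0 : 0 < `|y| by rewrite normr_gt0.
have := dn_ub fd (Ylin `|y|^-1 y 0 Yy Y0).
rewrite addr0 normrZ normfV normr_id mulVf ?gt_eqF // lexx => /(_ isT).
have [fl _] := fd.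
rewrite -[X in f X](addr0) fl // (dn_f0 Y0 fd) addr0 normrM normfV normr_id => h.
have := ler_wpM2l (normr_ge0 y) h; rewrite mulrA mulfV ?gt_eqF // mul1r mulrC.
done.
Qed.

Lemma in_dual_comb (R : realType) (Z : normedModType R) (f g : Z -> R) (a : R) :
  in_dual f -> in_dual g -> in_dual (fun z => a * f z + g z).
Proof.
move=> [fl [C1 h1]] [gl [C2 h2]]; split.
  by move=> b y1 y2 _ _; rewrite fl // gl //; ring.
exists (`|a| * C1 + C2) => z _.
have e1 : `|a * f z| <= `|a| * C1 * `|z|.
  by rewrite normrM -mulrA; apply: ler_wpM2l => //; exact: h1.
have e2 := h2 z I.
have e3 := ler_normD (a * f z) (g z).
rewrite mulrDl; lra.
Qed.

Lemma PZ (R : realType) (Z : normedModType R) (Y : set Z) (P : (Z -> R) -> (Z -> R)) :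
  Y 0 ->
  (forall f, in_dual f -> annihilator Y (P f)) ->
  (forall f, in_dual f -> P f <> (fun _ => 0) ->
     dual_norm setT (fun z => f z - P f z) < dual_norm setT f) ->
  forall g, in_dual g -> dual_norm setT g <= dual_norm Y g -> P g = (fun _ => 0).
Proof.
move=> Y0 Pann Pstr g gd hg; apply: contrapT => nz.
have h1 := Pstr g gd nz.
have [Pd Pz] := Pann g gd.
have hd : in_dual (fun z => g z - P g z).
  have -> : (fun z => g z - P g z) = (fun z => -1 * P g z + g z).
    by apply: funext => z; rewrite mulN1r addrC.
  exact: in_dual_comb.
have h3 : dual_norm Y g = dual_norm Y (fun z => g z - P g z).
  by apply: dn_eq => y Yy; rewrite Pz // subr0.
have h4 := dn_sub hd Y0.
lra.
Qed.

Lemma Puniq (R : realType) (Z : normedModType R) (Y : set Z) (P : (Z -> R) -> (Z -> R)) :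
  (forall (a : R) f g, in_dual f -> in_dual g ->
            P (fun z => a * f z + g z) = (fun z => a * P f z + P g z)) ->
  (forall f, annihilator Y f -> P f = f) ->
  forall g1 g2, in_dual g1 -> in_dual g2 -> (forall y, Y y -> g1 y = g2 y) ->
  P g1 = (fun _ => 0) -> P g2 = (fun _ => 0) -> g1 = g2.
Proof.
move=> Plin Pid g1 g2 d1 d2 e P1 P2.
have hd : in_dual (fun z => -1 * g2 z + g1 z) by exact: in_dual_comb.
have ha : annihilator Y (fun z => -1 * g2 z + g1 z).
  by split => // y Yy; rewrite e // mulN1r addNr.
have := Pid _ ha; rewrite Plin // P1 P2 => e2.
apply: funext => z; have := congr1 (fun k => k z) e2 => /= h; lra.
Qed.

Theorem theorem3p8 (R : realType) (X Z : completeNormedModType R) (Y : set Z)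
  (hYsub : lin_subspace Y) (hYcl : closed Y) (hSU : property_SU Y)
  (S : X -> Z -> R) (hS : is_op_to_dual Y S) (hiso : dual_isometry Y S) :
  exists T : X -> Z -> R,
    [/\ is_op_to_dual setT T,
        op_norm setT T = op_norm Y S,
        (forall x y, Y y -> T x y = S x y) &
        (forall T' : X -> Z -> R, is_op_to_dual setT T' ->
           op_norm setT T' = op_norm Y S ->
           (forall x y, Y y -> T' x y = S x y) -> T' = T)].
Proof.
have [Y0 Ylin] := hYsub.
have [P [[Pdual Plin] _ Pann Pid Pstr]] := hSU.
have [Sd [Sl [CS hCS]]] := hS.
have ext : forall x, exists g, [/\ in_dual g, (forall y, Y y -> g y = S x y) &
      P g = (fun _ => 0) /\ dual_norm setT g = `|x|].
  move=> x.
  have padd : forall u v : Z, `|x| * `|u + v| <= `|x| * `|u| + `|x| * `|v|.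
    by move=> u v; rewrite -mulrDr; apply: ler_wpM2l => //; exact: ler_normD.
  have phom : forall (t : R) (u : Z), 0 < t -> `|x| * `|t *: u| = t * (`|x| * `|u|).
    by move=> t u t0; rewrite normrZ gtr0_norm // mulrCA.
  have fp : forall y, Y y -> S x y <= `|x| * `|y|.
    move=> y Yy; apply: le_trans (ler_norm _) _; rewrite -(hiso x).
    exact: dn_bound hYsub (Sd x) Yy.
  have [g [gl gY gp]] := @hahn_banach R Z (fun z => `|x| * `|z|) Y (S x)
     padd phom Y0 Ylin (Sd x).1 fp.
  have g0 : g 0 = 0.
    have := gl 1 0 0; rewrite scale1r addr0 mul1r => h.
    by apply: (@addrI _ (g 0)); rewrite addr0 -h.
  have gN u : g (- u) = - g u.
    by have := gl (-1) u 0; rewrite scaleN1r addr0 g0 addr0 mulN1r.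
  have gabs u : `|g u| <= `|x| * `|u|.
    rewrite ler_norml; apply/andP; split; last exact: gp.
    by have := gp (- u); rewrite gN normrN => h; lra.
  have gd : in_dual g.
    by split; [move=> a y1 y2 _ _; exact: gl | exists `|x| => z _; exact: gabs].
  have dnY : dual_norm Y g = `|x| by rewrite (dn_eq gY) hiso.
  have dnx : dual_norm setT g = `|x|.
    apply/eqP; rewrite eq_le; apply/andP; split.
    + apply: dn_le => // z _ z1; apply: le_trans (gabs z) _.
      by rewrite -[X in _ <= X]mulr1; apply: ler_wpM2l.
    + by rewrite -dnY; exact: dn_sub.
  exists g; split => //; split => //.
  by apply: (PZ Y0 Pann Pstr gd); rewrite dnx dnY.
have [T hT] := choice ext.
have Tlin : forall a x1 x2, T (a *: x1 + x2) = (fun z => a * T x1 z + T x2 z).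
  move=> a x1 x2.
  have [d Yd [Pd _]] := hT (a *: x1 + x2).
  have [d1 Y1 [P1 _]] := hT x1.
  have [d2 Y2 [P2 _]] := hT x2.
  apply: (Puniq Plin Pid) => //.
  - exact: in_dual_comb.
  - by move=> y Yy; rewrite Yd // Sl // Y1 // Y2.
  - by rewrite Plin // P1 P2; apply: funext => z; rewrite mulr0 addr0.
exists T; split.
- split; first by move=> x; have [d _ _] := hT x.
  split; first by move=> a x1 x2 y _; rewrite Tlin.
  by exists 1 => x; have [_ _ [_ ->]] := hT x; rewrite mul1r.
- rewrite /op_norm; congr sup; apply/seteqP; split => _ [x hx <-]; exists x => //.
    by have [_ _ [_ ->]] := hT x; rewrite hiso.
  by have [_ _ [_ ->]] := hT x; rewrite hiso.
- by move=> x y Yy; have [_ hY _] := hT x; exact: hY.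
move=> T' [T'd [T'l [C' hC']]] Tn TY.
have T'0 : forall z, T' 0 z = 0.
  move=> z; have := T'l 1 0 0 z I; rewrite scale1r addr0 mul1r => h.
  by apply: (@addrI _ (T' 0 z)); rewrite addr0 -h.
have opS : op_norm Y S <= 1.
  apply: ge_sup.
    by exists (dual_norm Y (S 0)); exists 0 => //; rewrite /= normr0 ler01.
  by move=> _ [x x1 <-]; rewrite hiso.
have T'u : forall u, `|u| <= 1 -> dual_norm setT (T' u) <= op_norm setT T'.
  move=> u u1; apply: ub_le_sup; last by exists u.
  exists `|C'| => _ [v v1 <-]; apply: le_trans (hC' v) _.
  apply: (@le_trans _ _ (`|C'| * `|v|)).
    by apply: ler_wpM2r => //; exact: ler_norm.
  by rewrite -[X in _ <= X]mulr1; apply: ler_wpM2l.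
have bnd : forall x z, `|z| <= 1 -> `|T' x z| <= `|x|.
  move=> x z z1; have [->|nx] := eqVneq x 0; first by rewrite T'0 !normr0.
  set u := `|x|^-1 *: x.
  have xu : x = `|x| *: u + 0 by rewrite addr0 /u scalerA mulfV ?normr_eq0 // scale1r.
  have u1 : `|u| <= 1 by rewrite /u normrZ normfV normr_id mulVf ?normr_eq0.
  have -> : T' x z = `|x| * T' u z by rewrite {1}xu T'l // T'0 addr0.
  rewrite normrM normr_id -[X in _ <= X]mulr1; apply: ler_wpM2l => //.
  apply: le_trans (@dn_ub _ _ setT (T' u) z (T'd u) I z1) _.
  by apply: le_trans (T'u u u1) _; rewrite Tn.
apply: funext => x; have [d1 Y1 [P1 n1]] := hT x.
apply: (Puniq Plin Pid (T'd x) d1) => //.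
  by move=> y Yy; rewrite TY // Y1.
apply: (PZ Y0 Pann Pstr (T'd x)).
rewrite (dn_eq (TY x)) hiso; apply: dn_le => // z _ z1; exact: bnd.
Qed.
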